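(* Let $\mathcal H_\mathrm{S},\mathcal H_\mathrm{M},\mathcal H_\mathrm{R}$ be finite-dimensional Hilbert spaces, $\rho^\mathrm{i}_\mathrm{SM}$ any density operator on $\mathcal H_\mathrm{S}\otimes\mathcal H_\mathrm{M}$, $\mathcal H_\mathrm{R}$ a Hermitian reservoir Hamiltonian, $\beta>0$, $\rho^\mathrm{i}_\mathrm{R}=e^{-\beta\mathcal H_\mathrm{R}}/\mathrm{Tr}\,e^{-\beta\mathcal H_\mathrm{R}}$, $U_\mathrm{SR}$ a unitary on $\mathcal H_\mathrm{S}\otimes\mathcal H_\mathrm{R}$ and $\rho^\mathrm{f}_\mathrm{SMR}=(U_\mathrm{SR}\otimes 1_\mathrm{M})(\rho^\mathrm{i}_\mathrm{SM}\otimes\rho^\mathrm{i}_\mathrm{R})(U_\mathrm{SR}\otimes 1_\mathrm{M})^\dagger$. With $Q_\mathrm{R}=\mathrm{Tr}[(\rho^\mathrm{f}_\mathrm{R}-\rho^\mathrm{i}_\mathrm{R})\mathcal H_\mathrm{R}]$, $\Sigma_\mathrm{S}=\mathcal S(\rho^\mathrm{f}_\mathrm{S})-\mathcal S(\rho^\mathrm{i}_\mathrm{S})+\beta Q_\mathrm{R}$, $\Sigma_\mathrm{S|M}=\mathcal S_\mathrm{S|M}(\mathrm f)-\mathcal S_\mathrm{S|M}(\mathrm i)+\beta Q_\mathrm{R}$ and $\Sigma_\mathrm{I}=\Sigma_\mathrm{S|M}-\Sigma_\mathrm{S}$, one has $$\Sigma_\mathrm{I}=\mathcal I_\mathrm{M:R|S}(\mathrm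 f):=\mathcal S(\rho^\mathrm{f}_\mathrm{SR})+\mathcal S(\rho^\mathrm{f}_\mathrm{SM})-\mathcal S(\rho^\mathrm{f}_\mathrm{S})-\mathcal S(\rho^\mathrm{f}_\mathrm{SMR}).$$
   Context: $\mathcal S(\rho)=-\mathrm{Tr}\,\rho\ln\rho$ is the von Neumann entropy; $\mathcal S_\mathrm{S|M}=\mathcal S(\rho_\mathrm{SM})-\mathcal S(\rho_\mathrm{M})$ evaluated on the reduced states at the indicated time; reduced states are partial traces of the global state. *)

(* Defs.v *)
From HB Require Import structures.
From mathcomp Require Import all_boot all_order all_algebra.
From mathcomp Require Import sesquilinear spectral.
From mathcomp.real_closed Require Import complex mxtens.
From mathcomp Require Import reals.
From mathcomp.analysis Require Import sequences exp.

Set Implicit Arguments.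
Unset Strict Implicit.
Unset Printing Implicit Defensive.

Import Order.TTheory GRing.Theory Num.Theory Num.Def.
Local Open Scope ring_scope.
Local Open Scope complex_scope.

Section QInfo.
Variable R : realType.
Local Notation C := (R[i]).

Definition adj {m n} (A : 'M[C]_(m, n)) : 'M[C]_(n, m) := (map_mx conjC A)^T.

Definition psd {n} (A : 'M[C]_n) : Prop :=
  forall v : 'rV[C]_n, 0 <= (v *m A *m adj v) 0 0.

Definition density {n} (A : 'M[C]_n) : Prop :=
  A \is hermsymmx /\ psd A /\ \tr A = 1.

Definition mxfun {n} (f : C -> C) (A : 'M[C]_n) : 'M[C]_n :=
  invmx (spectralmx A) *m diag_mx (map_mx f (spectral_diag A)) *m spectralmx A.

(* von Neumann entropy  S(rho) = - Tr rho ln rho  = - sum_k l_k ln l_k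
   over the eigenvalues l_k of rho (with the convention 0 ln 0 = 0) *)
Definition vN_entropy {n} (rho : 'M[C]_n) : R :=
  - \sum_(k < n) (let l := complex.Re (spectral_diag rho 0 k) in
                       if l == 0 then 0 else l * ln l).

Definition gibbs {n} (beta : R) (H : 'M[C]_n) : 'M[C]_n :=
  let E := mxfun (fun z => (expR (- beta * complex.Re z))%:C) H in (\tr E)^-1 *: E.

(* partial traces on H_1 (x) H_2 ~ 'M_(m * n) (index (i,j) |-> i * n + j,
   the convention of tensmx) *)
Definition ptrace2 {m n} (A : 'M[C]_(m * n)) : 'M[C]_m :=
  \matrix_(i, j) \sum_(k < n) A (mxtens_index (i, k)) (mxtens_index (j, k)).
Definition ptrace1 {m n} (A : 'M[C]_(m * n)) : 'M[C]_n :=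
  \matrix_(i, j) \sum_(k < m) A (mxtens_index (k, i)) (mxtens_index (k, j)).

Definition idx_SRM_of_SMR {s m r} (p : 'I_(s * m * r)) : 'I_(s * r * m) :=
  let: (sm, c) := mxtens_unindex p in
  let: (a, b) := mxtens_unindex sm in
  mxtens_index (mxtens_index (a, c), b).
Definition idx_SMR_of_SRM {s m r} (p : 'I_(s * r * m)) : 'I_(s * m * r) :=
  let: (sr, b) := mxtens_unindex p in
  let: (a, c) := mxtens_unindex sr in
  mxtens_index (mxtens_index (a, b), c).

Definition to_SRM {s m r} (A : 'M[C]_(s * m * r)) : 'M[C]_(s * r * m) :=
  \matrix_(p, q) A (idx_SMR_of_SRM p) (idx_SMR_of_SRM q).
Definition to_SMR {s m r} (A : 'M[C]_(s * r * m)) : 'M[C]_(s * m * r) :=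
  \matrix_(p, q) A (idx_SRM_of_SMR p) (idx_SRM_of_SMR q).

Definition UxId {s m r} (U : 'M[C]_(s * r)) : 'M[C]_(s * m * r) :=
  to_SMR (U *t (1%:M : 'M[C]_m)).

Definition cond_entropy {s m} (rhoSM : 'M[C]_(s * m)) : R :=
  vN_entropy rhoSM - vN_entropy (ptrace1 rhoSM).

End QInfo.

(* Main.v *)
Require Import Defs.
From HB Require Import structures.
From mathcomp Require Import all_boot all_order all_algebra.
From mathcomp Require Import sesquilinear spectral.
From mathcomp.real_closed Require Import complex mxtens.
From mathcomp Require Import reals.
From mathcomp.analysis Require Import sequences exp.
From mathcomp Require Import ring.
Import Order.TTheory GRing.Theory Num.Theory Num.Def.
Local Open Scope ring_scope.
Local Open Scope complex_scope.
Local Open Scope sesquilinear_scope.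
Set Implicit Arguments.
Unset Strict Implicit.
Unset Printing Implicit Defensive.

Arguments mxtens_index {m n}.
Arguments mxtens_unindex {m n}.

Section S1.
Variable R : realType.
Local Notation C := (R[i]).

Lemma adjE m n (A : 'M[C]_(m,n)) : adj A = A ^t*.
Proof. by rewrite /adj map_trmx. Qed.

Lemma char_poly_conj n (P B : 'M[C]_n) : P \in unitmx ->
  char_poly (invmx P *m B *m P) = char_poly B.
Proof.
move=> Pu; rewrite /char_poly /char_poly_mx.
have -> : 'X%:M - map_mx polyC (invmx P *m B *m P) =
  map_mx polyC (invmx P) *m ('X%:M - map_mx polyC B) *m map_mx polyC P.
  rewrite mulmxBr mulmxBl !map_mxM; congr (_ - _).
  rewrite mul_mx_scalar -scalemxAl -map_mxM mulVmx // map_mx1 scalemx1 //.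
rewrite !det_mulmx mulrC mulrA -det_mulmx -map_mxM mulmxV // map_mx1 det1 mul1r.
done.
Qed.

Definition hh (z : C) : R := let l := complex.Re z in if l == 0 then 0 else l * ln l.
Definition ent n (d : 'rV[C]_n) : R := - \sum_(k < n) hh (d 0 k).

Lemma vN_entropyE n (A : 'M[C]_n) : vN_entropy A = ent (spectral_diag A).
Proof. by []. Qed.

Lemma ent_unitary n (A P : 'M[C]_n) (d : 'rV[C]_n) :
  P \is unitarymx -> A = adj P *m diag_mx d *m P -> vN_entropy A = ent d.
Proof.
move=> Pu AE.
have An : A \is normalmx.
  by apply/orthomx_spectral_subproof; exists (P, d) => //=; rewrite invmx_unitary // -adjE.
have /orthomx_spectralP AE2 := An.
have Pun := unitarymx_unit Pu.
have AE2' : A = invmx (spectralmx A) *m diag_mx (spectral_diag A) *m spectralmx A := AE2.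
have E1 : char_poly A = char_poly (diag_mx d).
  by rewrite [in LHS]AE adjE -invmx_unitary // char_poly_conj.
have E2 : char_poly A = char_poly (diag_mx (spectral_diag A)).
  by rewrite [in LHS]AE2' char_poly_conj // spectral_unit.
have : char_poly (diag_mx d) = char_poly (diag_mx (spectral_diag A)) by rewrite -E1 -E2.
have D (v : 'rV[C]_n) : \prod_(i < n) ('X - (diag_mx v i i)%:P) = \prod_(i < n) ('X - (v 0 i)%:P).
  by apply: eq_bigr => i _; rewrite mxE eqxx mulr1n.
rewrite !char_poly_trig // !D => E.
have : perm_eq [seq d 0 i | i <- index_enum 'I_n] [seq spectral_diag A 0 i | i <- index_enum 'I_n].
  apply: prod_XsubC_eq; rewrite !big_map /=.
  exact: E.
move=> /(perm_big _ (op := (@GRing.add R)) (x := 0) (F := hh) (P := xpredT)) pe.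
rewrite vN_entropyE /ent; congr (- _).
by move: pe; rewrite !big_map.
Qed.
End S1.

Section S2.
Variable R : realType.
Local Notation C := (R[i]).

Lemma tidx_inj m n : injective (@mxtens_index m n).
Proof. exact: can_inj (@mxtens_indexK m n). Qed.

Lemma tidx_eq m n (a a' : 'I_m) (b b' : 'I_n) :
  (mxtens_index (a, b) == mxtens_index (a', b')) = (a == a') && (b == b').
Proof. by rewrite (inj_eq (@tidx_inj m n)) xpair_eqE. Qed.

Lemma sum_tens m n (F : 'I_(m * n) -> C) :
  \sum_(p < m * n) F p = \sum_(i < m) \sum_(j < n) F (mxtens_index (i, j)).
Proof.
rewrite pair_big /= (reindex (@mxtens_index m n)) /=.
  by apply: eq_bigr => -[i j].
by exists mxtens_unindex => x _; rewrite (mxtens_indexK, mxtens_unindexK).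
Qed.

Lemma sum_delta n (k : 'I_n) (F : 'I_n -> C) :
  \sum_(b < n) ((k == b)%:R * F b) = F k.
Proof.
rewrite (bigD1 k) //= eqxx mul1r big1 ?addr0 // => b /negPf.
by rewrite eq_sym => ->; rewrite mul0r.
Qed.

Lemma sum_delta' n (k : 'I_n) (F : 'I_n -> C) :
  \sum_(b < n) (F b * (b == k)%:R) = F k.
Proof.
by rewrite -[RHS](sum_delta k); apply: eq_bigr => b _; rewrite mulrC eq_sym.
Qed.

Lemma tens1E m (A : 'M[C]_m) n i k a b :
  (A *t (1%:M : 'M[C]_n)) (mxtens_index (i, k)) (mxtens_index (a, b)) =
  A i a * (k == b)%:R.
Proof. by rewrite tensmxE mxE. Qed.

Lemma adj_tens m n p q (A : 'M[C]_(m, n)) (B : 'M[C]_(p, q)) :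
  adj (A *t B) = adj A *t adj B.
Proof. by apply/matrixP => i j; rewrite !mxE rmorphM. Qed.

Lemma adjK m n (A : 'M[C]_(m, n)) : adj (adj A) = A.
Proof. by apply/matrixP => i j; rewrite !mxE conjCK. Qed.

Lemma adjM m n p (A : 'M[C]_(m, n)) (B : 'M[C]_(n, p)) :
  adj (A *m B) = adj B *m adj A.
Proof. by rewrite /adj map_mxM trmx_mul. Qed.

Lemma adj1 n : adj (1%:M : 'M[C]_n) = 1%:M.
Proof. by rewrite /adj map_mx1 trmx1. Qed.

Lemma tens11 m n : (1%:M : 'M[C]_m) *t (1%:M : 'M[C]_n) = 1%:M.
Proof.
apply/matrixP => p q.
case: (mxtens_indexP p) => a b; case: (mxtens_indexP q) => a' b'.
by rewrite tensmxE !mxE tidx_eq; case: (a == a'); case: (b == b'); rewrite ?mulr1 ?mulr0 ?mul0r.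
Qed.

Lemma ptrace2_tens m n (A : 'M[C]_m) (B : 'M[C]_n) :
  ptrace2 (A *t B) = \tr B *: A.
Proof.
apply/matrixP => i j; rewrite !mxE /mxtrace mulr_suml.
by apply: eq_bigr => k _; rewrite tensmxE mulrC.
Qed.

Lemma ptrace1_tens m n (A : 'M[C]_m) (B : 'M[C]_n) :
  ptrace1 (A *t B) = \tr A *: B.
Proof.
apply/matrixP => i j; rewrite !mxE /mxtrace mulr_suml.
by apply: eq_bigr => k _; rewrite tensmxE.
Qed.

Lemma mulA1E m n (A : 'M[C]_m) p (X : 'M[C]_(m * n, p)) i k q :
  ((A *t (1%:M : 'M[C]_n)) *m X) (mxtens_index (i, k)) q =
  \sum_(a < m) A i a * X (mxtens_index (a, k)) q.
Proof.
rewrite mxE sum_tens; apply: eq_bigr => a _.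
rewrite -[RHS](sum_delta k (fun b => A i a * X (mxtens_index (a, b)) q)).
by apply: eq_bigr => b _; rewrite tens1E mulrCA mulrA.
Qed.

Lemma mulB1E m n (B : 'M[C]_m) p (Y : 'M[C]_(p, m * n)) P j k :
  (Y *m (B *t (1%:M : 'M[C]_n))) P (mxtens_index (j, k)) =
  \sum_(c < m) Y P (mxtens_index (c, k)) * B c j.
Proof.
rewrite mxE sum_tens; apply: eq_bigr => c _.
rewrite -[RHS](sum_delta' k (fun b => Y P (mxtens_index (c, b)) * B c j)).
by apply: eq_bigr => b _; rewrite tens1E mulrA.
Qed.

Lemma ptrace2_conj m n (A B : 'M[C]_m) (X : 'M[C]_(m * n)) :
  ptrace2 ((A *t (1%:M : 'M[C]_n)) *m X *m (B *t (1%:M : 'M[C]_n))) =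
  A *m ptrace2 X *m B.
Proof.
apply/matrixP => i j; rewrite !mxE.
under eq_bigr => k _ do rewrite mulB1E.
under eq_bigr => k _ do under eq_bigr => c _ do rewrite mulA1E mulr_suml.
rewrite exchange_big /=; apply: eq_bigr => c _.
rewrite !mxE mulr_suml; under [RHS]eq_bigr => a _ do rewrite !mxE mulr_sumr mulr_suml.
rewrite exchange_big /=; apply: eq_bigr => a _; apply: eq_bigr => k _.
by [].
Qed.

Lemma ptrace1_conj m n (A B : 'M[C]_m) (X : 'M[C]_(m * n)) :
  B *m A = 1%:M ->
  ptrace1 ((A *t (1%:M : 'M[C]_n)) *m X *m (B *t (1%:M : 'M[C]_n))) =
  ptrace1 X.
Proof.
move=> BA; apply/matrixP => i j; rewrite !mxE.
under eq_bigr => a _ do rewrite mulB1E.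
under eq_bigr => a _ do under eq_bigr => c _ do rewrite mulA1E mulr_suml.
rewrite exchange_big /=.
under eq_bigr => c _ do rewrite exchange_big /=.
have E c a' : \sum_(a < m) A a a' * X (mxtens_index (a', i)) (mxtens_index (c, j)) * B c a
   = X (mxtens_index (a', i)) (mxtens_index (c, j)) * (c == a')%:R.
  have := congr1 (fun M : 'M[C]_m => M c a') BA; rewrite !mxE => <-.
  rewrite mulr_sumr; apply: eq_bigr => a _; ring.
under eq_bigr => c _ do under eq_bigr => a' _ do rewrite E.
rewrite exchange_big /=; apply: eq_bigr => a' _.
by rewrite -[RHS](sum_delta' a' (fun c => X (mxtens_index (a', i)) (mxtens_index (c, j)))); apply: eq_bigr => c _; rewrite eq_sym.
Qed.
Section Perm.
Variables s m r : nat.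

Lemma f1E a b c : @idx_SRM_of_SMR s m r (mxtens_index (mxtens_index (a, b), c)) =
  mxtens_index (mxtens_index (a, c), b).
Proof. by rewrite /idx_SRM_of_SMR !mxtens_indexK. Qed.

Lemma f2E a b c : @idx_SMR_of_SRM s m r (mxtens_index (mxtens_index (a, c), b)) =
  mxtens_index (mxtens_index (a, b), c).
Proof. by rewrite /idx_SMR_of_SRM !mxtens_indexK. Qed.

Lemma f12K : cancel (@idx_SRM_of_SMR s m r) (@idx_SMR_of_SRM s m r).
Proof.
move=> p; case: (mxtens_indexP p) => sm c; case: (mxtens_indexP sm) => a b.
by rewrite f1E f2E.
Qed.

Lemma f21K : cancel (@idx_SMR_of_SRM s m r) (@idx_SRM_of_SMR s m r).
Proof.
move=> p; case: (mxtens_indexP p) => sr b; case: (mxtens_indexP sr) => a c.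
by rewrite f2E f1E.
Qed.

Lemma f2_bij : bijective (@idx_SMR_of_SRM s m r).
Proof. by exists (@idx_SRM_of_SMR s m r); [exact: f21K | exact: f12K]. Qed.

Lemma to_SRM_mul (A B : 'M[C]_(s * m * r)) :
  to_SRM (A *m B) = to_SRM A *m to_SRM B.
Proof.
apply/matrixP => p q; rewrite !mxE (reindex (@idx_SMR_of_SRM s m r)) /=.
  by apply: eq_bigr => l _; rewrite !mxE.
by apply: onW_bij; exact: f2_bij.
Qed.

Lemma to_SRM1 : to_SRM (1%:M : 'M[C]_(s * m * r)) = 1%:M.
Proof.
apply/matrixP => p q; rewrite !mxE (inj_eq (can_inj f21K)) //.
Qed.

Lemma to_SRM_adj (A : 'M[C]_(s * m * r)) : to_SRM (adj A) = adj (to_SRM A).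
Proof. by apply/matrixP => p q; rewrite !mxE. Qed.

Lemma to_SRMK (A : 'M[C]_(s * m * r)) : to_SMR (to_SRM A) = A.
Proof. by apply/matrixP => p q; rewrite !mxE !f12K. Qed.

Lemma to_SMRK (A : 'M[C]_(s * r * m)) : to_SRM (to_SMR A) = A.
Proof. by apply/matrixP => p q; rewrite !mxE !f21K. Qed.

Lemma to_SRM_inj : injective (@to_SRM R s m r).
Proof. exact: can_inj to_SRMK. Qed.

Lemma to_SRM_UxId (U : 'M[C]_(s * r)) : to_SRM (@UxId R s m r U) = U *t 1%:M.
Proof. by rewrite /UxId to_SMRK. Qed.

Lemma UxId_unitary (U : 'M[C]_(s * r)) : U \is unitarymx -> @UxId R s m r U \is unitarymx.
Proof.
move=> /unitarymxP Uu; apply/unitarymxP; apply: to_SRM_inj.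
rewrite -adjE to_SRM_mul to_SRM_adj to_SRM_UxId to_SRM1 adj_tens tensmx_mul adj1 mul1mx.
by rewrite adjE Uu tens11.
Qed.

Lemma ptrace2_SRM_tens (A : 'M[C]_(s * m)) (B : 'M[C]_r) :
  ptrace2 (to_SRM (A *t B)) = ptrace2 A *t B.
Proof.
apply/matrixP => p q.
case: (mxtens_indexP p) => a c; case: (mxtens_indexP q) => a' c'.
rewrite !mxE !mxtens_indexK /= mulr_suml; apply: eq_bigr => b _.
by rewrite !mxE !f2E !mxtens_indexK.
Qed.

Lemma ptrace1_SRM_tens (A : 'M[C]_(s * m)) (B : 'M[C]_r) :
  ptrace1 (to_SRM (A *t B)) = \tr B *: ptrace1 A.
Proof.
apply/matrixP => b b'; rewrite !mxE sum_tens mulr_sumr; apply: eq_bigr => a _.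
rewrite /mxtrace mulr_suml; apply: eq_bigr => c _.
by rewrite !mxE !f2E !mxtens_indexK mulrC.
Qed.

Lemma ptrace12_SRM (X : 'M[C]_(s * m * r)) :
  ptrace1 (ptrace2 X) = ptrace1 (to_SRM X).
Proof.
apply/matrixP => b b'; rewrite !mxE sum_tens; apply: eq_bigr => a _.
rewrite !mxE; apply: eq_bigr => c _.
by rewrite !mxE !f2E.
Qed.

End Perm.
End S2.

Section S3.
Variable R : realType.
Local Notation C := (R[i]).

Definition hr (l : R) : R := if l == 0 then 0 else l * ln l.
Definition entr n (d : 'rV[R]_n) : R := - \sum_(k < n) hr (d 0 k).
Definition cmx m n (d : 'M[R]_(m, n)) : 'M[C]_(m, n) := map_mx (real_complex R) d.

Definition dens_dec n (A P : 'M[C]_n) (d : 'rV[R]_n) :=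
  [/\ P \is unitarymx, A = adj P *m diag_mx (cmx d) *m P,
      (forall k, 0 <= d 0 k) & \sum_k d 0 k = 1].

Lemma entr_dec n (A P : 'M[C]_n) d : dens_dec A P d -> vN_entropy A = entr d.
Proof.
case=> Pu AE _ _; rewrite (ent_unitary Pu AE) /ent /entr; congr (- _).
by apply: eq_bigr => k _; rewrite /hh /hr mxE.
Qed.

Lemma hr_mul a b : 0 <= a -> 0 <= b -> hr (a * b) = b * hr a + a * hr b.
Proof.
rewrite /hr => a0 b0; have [->|an] := eqVneq a 0; first by rewrite mul0r eqxx !mulr0 mul0r addr0.
have [->|bn] := eqVneq b 0; first by rewrite mulr0 eqxx !mul0r addr0.
rewrite mulf_eq0 (negPf an) (negPf bn) /= lnM ?posrE ?lt_def ?an ?bn //.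
ring.
Qed.

Definition tensrv m n (d : 'rV[R]_m) (e : 'rV[R]_n) : 'rV[R]_(m * n) :=
  \row_p (d 0 (mxtens_unindex p).1 * e 0 (mxtens_unindex p).2).

Lemma sum_tensR m n (F : 'I_(m * n) -> R) :
  \sum_(p < m * n) F p = \sum_(i < m) \sum_(j < n) F (mxtens_index (i, j)).
Proof.
rewrite pair_big /= (reindex (@mxtens_index m n)) /=.
  by apply: eq_bigr => -[i j].
by exists mxtens_unindex => x _; rewrite (mxtens_indexK, mxtens_unindexK).
Qed.

Lemma entr_tens m n (d : 'rV[R]_m) (e : 'rV[R]_n) :
  (forall k, 0 <= d 0 k) -> (forall k, 0 <= e 0 k) ->
  \sum_k d 0 k = 1 -> \sum_k e 0 k = 1 ->
  entr (tensrv d e) = entr d + entr e.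
Proof.
move=> d0 e0 d1 e1; rewrite /entr sum_tensR -opprD; congr (- _).
under eq_bigr => i _ do under eq_bigr => j _ do rewrite mxE mxtens_indexK /= hr_mul //.
under eq_bigr => i _ do rewrite big_split /= -mulr_suml -mulr_sumr e1 mul1r.
by rewrite big_split /= -mulr_suml d1 mul1r.
Qed.

Lemma diag_tens m n (d : 'rV[R]_m) (e : 'rV[R]_n) :
  diag_mx (cmx (tensrv d e)) = diag_mx (cmx d) *t diag_mx (cmx e).
Proof.
apply/matrixP => p q.
case: (mxtens_indexP p) => a b; case: (mxtens_indexP q) => a' b'.
rewrite tensmxE !mxE tidx_eq mxtens_indexK /= rmorphM.
by case: (a == a'); case: (b == b'); rewrite ?mulr1n ?mulr0n ?mulr0 ?mul0r.
Qed.

Lemma tens_unitary m n (P : 'M[C]_m) (Q : 'M[C]_n) :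
  P \is unitarymx -> Q \is unitarymx -> P *t Q \is unitarymx.
Proof.
move=> /unitarymxP Pu /unitarymxP Qu; apply/unitarymxP.
by rewrite -adjE adj_tens tensmx_mul !adjE Pu Qu tens11.
Qed.

Lemma dens_dec_tens m n (A P : 'M[C]_m) d (B Q : 'M[C]_n) e :
  dens_dec A P d -> dens_dec B Q e -> dens_dec (A *t B) (P *t Q) (tensrv d e).
Proof.
case=> Pu AE d0 d1 [Qu BE e0 e1]; split.
- exact: tens_unitary.
- by rewrite diag_tens adj_tens !tensmx_mul -AE -BE.
- by move=> k; rewrite mxE mulr_ge0.
- rewrite sum_tensR -[RHS]d1; apply: eq_bigr => i _.
  by under eq_bigr => j _ do rewrite mxE mxtens_indexK /=; rewrite -mulr_sumr e1 mulr1.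
Qed.

Lemma unitary_adj n (W : 'M[C]_n) : W \is unitarymx -> adj W *m W = 1%:M.
Proof. by move=> Wu; rewrite adjE -[W^t* *m W]mul1mx mulmxA mulmxKtV. Qed.

Lemma dens_dec_conj n (A P W : 'M[C]_n) d :
  dens_dec A P d -> W \is unitarymx ->
  dens_dec (W *m A *m adj W) (P *m adj W) d.
Proof.
case=> Pu AE d0 d1 Wu; split.
- apply: mul_unitarymx; first exact: Pu.
  by rewrite adjE trmxC_unitary; exact: Wu.
- by rewrite AE adjM adjK !mulmxA.
- exact: d0.
- exact: d1.
Qed.

Lemma trace_dec n (A P : 'M[C]_n) (d : 'rV[C]_n) :
  P \is unitarymx -> A = adj P *m diag_mx d *m P -> \tr A = \sum_k d 0 k.
Proof.
move=> Pu ->; have PP : P *m adj P = 1%:M by rewrite adjE; apply/unitarymxP.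
by rewrite mxtrace_mulC mulmxA PP mul1mx mxtrace_diag.
Qed.

Lemma diag_dec n (A P : 'M[C]_n) (d : 'rV[C]_n) :
  P \is unitarymx -> A = adj P *m diag_mx d *m P -> diag_mx d = P *m A *m adj P.
Proof.
move=> Pu ->; have PP : P *m adj P = 1%:M by rewrite adjE; apply/unitarymxP.
by rewrite !mulmxA PP mul1mx -mulmxA PP mulmx1.
Qed.

Lemma quad_row n (A P : 'M[C]_n) k :
  (P *m A *m adj P) k k = (row k P *m A *m adj (row k P)) 0 0.
Proof.
rewrite !mxE; apply: eq_bigr => j _; rewrite !mxE; congr (_ * _).
by apply: eq_bigr => i _; rewrite !mxE.
Qed.

Lemma psd_diag_ge0 n (A P : 'M[C]_n) (d : 'rV[C]_n) :
  psd A -> P \is unitarymx -> A = adj P *m diag_mx d *m P -> forall k, 0 <= d 0 k.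
Proof.
move=> Apsd Pu AE k.
have := congr1 (fun M : 'M[C]_n => M k k) (diag_dec Pu AE); rewrite /= mxE eqxx mulr1n => ->.
by rewrite quad_row; exact: Apsd.
Qed.

Lemma ge0_real (x : C) : 0 <= x -> x = (complex.Re x)%:C /\ 0 <= complex.Re x.
Proof.
rewrite lecE => /andP[/eqP Ix Rx]; split => //.
by move: Ix; case: x {Rx} => a b /= ->.
Qed.

Lemma density_dec n (A : 'M[C]_n) : density A -> exists P d, dens_dec A P d.
Proof.
case=> Ah [Apsd Atr].
have /orthomx_spectralP AE := hermitian_normalmx Ah.
set P := spectralmx A in AE; set e := spectral_diag A in AE.
have Pu : P \is unitarymx by exact: spectral_unitarymx.
have AE' : A = adj P *m diag_mx e *m P by rewrite adjE -invmx_unitary.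
clearbody P e.
have e0 := psd_diag_ge0 Apsd Pu AE'.
have ee : cmx (map_mx (@complex.Re R) e) = e.
  by apply/matrixP => i k; rewrite /cmx !mxE (ord1 i); exact: esym (proj1 (ge0_real (e0 k))).
exists P, (map_mx (@complex.Re R) e); split.
- exact: Pu.
- by rewrite ee.
- by move=> k; rewrite mxE; exact: (proj2 (ge0_real (e0 k))).
- apply: (@complexI R); rewrite rmorph_sum rmorph1 /=.
  rewrite -Atr (trace_dec Pu AE'); apply: eq_bigr => k _.
  rewrite mxE; exact: esym (proj1 (ge0_real (e0 k))).
Qed.

Lemma gibbs_dec r beta (H : 'M[C]_r) : (0 < r)%N ->
  exists P d, dens_dec (gibbs beta H) P d.
Proof.
move=> r0.
have Qu := spectral_unitarymx H.
rewrite /gibbs /mxfun.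
move: (spectralmx H) (spectral_diag H) Qu => Q e Qu.
rewrite (invmx_unitary Qu) -adjE.
pose g : 'rV[R]_r := \row_k expR (- beta * complex.Re (e 0 k)).
have g0 k : 0 < g 0 k by rewrite mxE expR_gt0.
have sg0 : 0 < \sum_k g 0 k.
  rewrite (bigD1 (Ordinal r0)) //= ltr_wpDr ?g0 //.
  by apply: sumr_ge0 => k _; apply: ltW.
pose c := (\sum_k g 0 k)^-1.
have E : map_mx (fun z => (expR (- beta * complex.Re z))%:C) e = cmx g.
  by apply/matrixP => i k; rewrite /cmx !mxE (ord1 i).
rewrite E.
have trE : \tr (adj Q *m diag_mx (cmx g) *m Q) = (\sum_k g 0 k)%:C.
  rewrite (trace_dec Qu (erefl _)) rmorph_sum; apply: eq_bigr => k _.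
  by rewrite /cmx mxE.
exists Q, (c *: g); split.
- exact: Qu.
- rewrite /= trE scalemxAl scalemxAr; congr (_ *m _ *m _).
  apply/matrixP => i j; rewrite /cmx !mxE.
  rewrite -(fmorphV (real_complex R)) -/c.
  by case: (i == j); rewrite ?mulr1n ?mulr0n ?mulr0 ?rmorphM.
- by move=> k; rewrite mxE mulr_ge0 ?invr_ge0 ?ltW.
- under eq_bigr => k _ do rewrite mxE.
  by rewrite -mulr_sumr mulVf // gt_eqF.
Qed.

Lemma herm_adj n (A : 'M[C]_n) : (A \is hermsymmx) = (A == adj A).
Proof. by rewrite is_hermitianmxE expr0 scale1r adjE. Qed.

Lemma ptrace2_adj m n (A : 'M[C]_(m * n)) : ptrace2 (adj A) = adj (ptrace2 A).
Proof. by apply/matrixP => i j; rewrite !mxE rmorph_sum; apply: eq_bigr => k _; rewrite !mxE. Qed.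

Lemma quadE n (v : 'rV[C]_n) (M : 'M[C]_n) :
  (v *m M *m adj v) 0 0 = \sum_j (\sum_i v 0 i * M i j) * (v 0 j)^*.
Proof. by rewrite !mxE; apply: eq_bigr => j _; rewrite !mxE. Qed.

Lemma ptrace2_psd m n (A : 'M[C]_(m * n)) : psd A -> psd (ptrace2 A).
Proof.
move=> Apsd v.
pose w (k : 'I_n) : 'rV[C]_(m * n) :=
  \row_p (v 0 (mxtens_unindex p).1 * ((mxtens_unindex p).2 == k)%:R).
have E : (v *m ptrace2 A *m adj v) 0 0 = \sum_k (w k *m A *m adj (w k)) 0 0.
  rewrite quadE; under [RHS]eq_bigr => k _ do rewrite quadE sum_tens.
  rewrite exchange_big /=; apply: eq_bigr => c _.
  under [RHS]eq_bigr => k _ do under eq_bigr => e _ do rewrite sum_tens.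
  have F k e : \sum_(i < m) \sum_(j < n) w k 0 (mxtens_index (i, j)) * A (mxtens_index (i, j)) (mxtens_index (c, e))
     = \sum_(i < m) v 0 i * A (mxtens_index (i, k)) (mxtens_index (c, e)).
    apply: eq_bigr => i _.
    rewrite -[RHS](sum_delta' k (fun j => v 0 i * A (mxtens_index (i, j)) (mxtens_index (c, e)))).
    by apply: eq_bigr => j _; rewrite mxE mxtens_indexK /=; ring.
  under [RHS]eq_bigr => k _ do under eq_bigr => e _ do rewrite F.
  have G k : \sum_(e < n) (\sum_(i < m) v 0 i * A (mxtens_index (i, k)) (mxtens_index (c, e))) * (w k 0 (mxtens_index (c, e)))^*
     = (\sum_(i < m) v 0 i * A (mxtens_index (i, k)) (mxtens_index (c, k))) * (v 0 c)^*.
    rewrite -[RHS](sum_delta' k (fun e => (\sum_(i < m) v 0 i * A (mxtens_index (i, k)) (mxtens_index (c, e))) * (v 0 c)^*)).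
    apply: eq_bigr => e _; rewrite mxE mxtens_indexK /= rmorphM rmorph_nat; ring.
  under [RHS]eq_bigr => k _ do rewrite G.
  rewrite -mulr_suml; congr (_ * _); rewrite exchange_big /=; apply: eq_bigr => i _.
  by rewrite mxE mulr_sumr.
by rewrite E; apply: sumr_ge0 => k _; exact: Apsd.
Qed.

Lemma ptrace2_tr m n (A : 'M[C]_(m * n)) : \tr (ptrace2 A) = \tr A.
Proof.
rewrite /mxtrace sum_tens; apply: eq_bigr => i _; by rewrite mxE.
Qed.

Lemma ptrace2_density m n (A : 'M[C]_(m * n)) : density A -> density (ptrace2 A).
Proof.
case=> Ah [Ap At]; split; last split.
- by rewrite herm_adj -ptrace2_adj -(eqP (_ : A == adj A)) // -herm_adj.
- exact: ptrace2_psd.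
- by rewrite ptrace2_tr.
Qed.
End S3.

Lemma dens_dec_tr (R : realType) n (A P : 'M[R[i]]_n) d : dens_dec A P d -> \tr A = 1.
Proof.
case=> Pu AE _ d1; rewrite (trace_dec Pu AE) -(rmorph1 (real_complex R)) -d1 rmorph_sum.
by apply: eq_bigr => k _; rewrite /cmx mxE.
Qed.

Theorem theorem3 (R : realType) (s m r : nat)
  (rhoSM : 'M[R[i]]_(s * m)) (HR : 'M[R[i]]_r) (beta : R)
  (U : 'M[R[i]]_(s * r)) :
  density rhoSM ->
  HR \is hermsymmx ->
  (0 < r)%N ->
  0 < beta ->
  U \is unitarymx ->
  let rhoR_i : 'M[R[i]]_r := gibbs beta HR in
  let rho_i : 'M[R[i]]_(s * m * r) := rhoSM *t rhoR_i in
  let W : 'M[R[i]]_(s * m * r) := @UxId R s m r U in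
  let rho_f : 'M[R[i]]_(s * m * r) := W *m rho_i *m adj W in
  (* reduced states, initial *)
  let rhoSM_i : 'M[R[i]]_(s * m) := ptrace2 rho_i in
  let rhoS_i : 'M[R[i]]_s := ptrace2 rhoSM_i in
  (* reduced states, final *)
  let rhoSM_f : 'M[R[i]]_(s * m) := ptrace2 rho_f in
  let rhoS_f : 'M[R[i]]_s := ptrace2 rhoSM_f in
  let rhoR_f : 'M[R[i]]_r := ptrace1 rho_f in
  let rhoSR_f : 'M[R[i]]_(s * r) := ptrace2 (to_SRM rho_f) in
  let QR : R := complex.Re (\tr ((rhoR_f - rhoR_i) *m HR)) in
  let Sigma_S : R := vN_entropy rhoS_f - vN_entropy rhoS_i + beta * QR in
  let Sigma_SgM : R :=
    cond_entropy rhoSM_f - cond_entropy rhoSM_i + beta * QR in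
  let Sigma_I : R := Sigma_SgM - Sigma_S in
  Sigma_I = vN_entropy rhoSR_f + vN_entropy rhoSM_f
            - vN_entropy rhoS_f - vN_entropy rho_f.
Proof.
move=> Hd _ r0 _ Uu rhoR_i rho_i W rho_f rhoSM_i rhoS_i rhoSM_f rhoS_f rhoR_f rhoSR_f QR Sigma_S Sigma_SgM Sigma_I.
have [P1 [d1 D1]] := density_dec Hd.
have [P2 [d2 D2]] := gibbs_dec beta HR r0.
have trR : \tr rhoR_i = 1 := dens_dec_tr D2.
have ESMi : rhoSM_i = rhoSM by rewrite /rhoSM_i /rho_i ptrace2_tens trR scale1r.
have [P3 [d3 D3]] := density_dec (ptrace2_density Hd).
have D1c := D1; case: D1c => _ _ d10 d11.
have D2c := D2; case: D2c => _ _ d20 d21.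
have D3c := D3; case: D3c => _ _ d30 d31.
have Di : dens_dec rho_i (P1 *t P2) (tensrv d1 d2) := dens_dec_tens D1 D2.
have Wu : W \is unitarymx := @UxId_unitary R s m r U Uu.
have Df : dens_dec rho_f ((P1 *t P2) *m adj W) (tensrv d1 d2) := dens_dec_conj Di Wu.
have ESRM : to_SRM rho_f = (U *t 1%:M) *m to_SRM rho_i *m (adj U *t 1%:M).
  by rewrite /rho_f !to_SRM_mul to_SRM_adj /W to_SRM_UxId adj_tens adj1.
have ESR : rhoSR_f = U *m (ptrace2 rhoSM *t rhoR_i) *m adj U.
  by rewrite /rhoSR_f ESRM ptrace2_conj /rho_i ptrace2_SRM_tens.
have DSR : dens_dec rhoSR_f ((P3 *t P2) *m adj U) (tensrv d3 d2).
  by rewrite ESR; apply: dens_dec_conj => //; apply: dens_dec_tens.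
have EM : ptrace1 rhoSM_f = ptrace1 rhoSM_i.
  rewrite /rhoSM_f ptrace12_SRM ESRM ptrace1_conj; last first.
    exact: unitary_adj Uu.
  by rewrite /rho_i ptrace1_SRM_tens trR scale1r ESMi.
rewrite /Sigma_I /Sigma_SgM /Sigma_S /cond_entropy EM.
rewrite (entr_dec Df) (entr_dec DSR) (entr_tens d10 d20 d11 d21) (entr_tens d30 d20 d31 d21).
rewrite /rhoS_i ESMi (entr_dec D3) (entr_dec D1).
ring.
Qed.
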